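(* Let $w\in\mathcal{M}_{n_x,n_y}$. The words $v$ occurring with nonzero coefficient in $Hw$ are precisely the words $v\in\mathcal{M}_{n_x,n_y}$ such that: (i) if $i\in E^x_v$ then $f^x_v(i)=f^x_w(i)-1$; (ii) if $i\notin E^x_v$ then $f^x_v(i)\ge f^x_w(i)$. The coefficient of such $v$ in $Hw$ is $(-1)^{|E^x_v|}$.
   Context: $\mathcal{M}_{n_x,n_y}$ is the set of words in letters $x,y$ with $n_x$ $x$'s and $n_y$ $y$'s; $\mathcal{F}_{n_x,n_y}$ its $\mathbb{Z}$-span. Number the $x$'s of a word $1,\dots,n_x$ from left to right. $f^x_w(i)$ is the number of $y$'s strictly to the left of the $i$-th $x$ in $w$. $E^x_v\subseteq\{1,\dots,n_x\}$ is the set of $i$ such that the $i$-th $x$ of $v$ is immediately followed by a $y$. Partial order: $w_0\le w_1$ iff $f^x_{w_0}(i)\le f^x_{w_1}(i)$ for all $i$. $\langle w_0|w_1\rangle=1$ if $w_0\le w_1$, else $0$. $H$ is the linear map on $\mathcal{F}_{n_x,n_y}$ with $\langle u|v\rangle=\langle v|Hu\rangle$ for all $u,v$. *)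

(* Defs.v *)
From HB Require Import structures.
From mathcomp Require Import all_boot all_order all_algebra.
Set Implicit Arguments. Unset Strict Implicit. Unset Printing Implicit Defensive.
Import Order.TTheory GRing.Theory Num.Theory.

(* A word in letters x, y is a boolean tuple: true = x, false = y.
   M_{nx,ny} = words of length nx+ny with exactly nx letters x. *)
Definition word (nx ny : nat) :=
  {t : (nx + ny).-tuple bool | count id t == nx}.

Section Words.
Variables nx ny : nat.

(* position (0-based) in w of the i-th x (i is 1-based, 1 <= i <= nx) *)
Definition xpos (w : word nx ny) (i : nat) : nat :=
  let s := val (val w) in
  nth 0 [seq k <- iota 0 (size s) | nth false s k] i.-1.

Definition fx (w : word nx ny) (i : nat) : nat :=
  let s := val (val w) in count negb (take (xpos w i) s).

Definition inEx (v : word nx ny) (i : nat) : bool :=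
  let s := val (val v) in
  ((xpos v i).+1 < size s)%N && ~~ nth false s (xpos v i).+1.

Definition Ex (v : word nx ny) : seq nat := [seq i <- iota 1 nx | inEx v i].

Definition wle (w0 w1 : word nx ny) : bool :=
  all (fun i => (fx w0 i <= fx w1 i)%N) (iota 1 nx).

Definition pairw (w0 w1 : word nx ny) : int := (wle w0 w1)%:R%R.

(* F_{nx,ny} : Z-span of the words, as finitely supported coefficient functions *)
Definition F := {ffun word nx ny -> int}.

Definition pairF (a b : F) : int :=
  \sum_(s : word nx ny) \sum_(t : word nx ny) (a s * b t * pairw s t)%R.

Definition basis (w : word nx ny) : F := [ffun z => (z == w)%:R%R].

End Words.

(* Main.v *)
Require Import Defs.
From HB Require Import structures.
From mathcomp Require Import all_boot all_order all_algebra.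
From mathcomp Require Import zify.
Import Order.TTheory GRing.Theory Num.Theory.

Fixpoint Gs (s : seq bool) : seq nat :=
  match s with [::] => [::] | true :: s' => 0 :: Gs s' | false :: s' => map succn (Gs s') end.
Fixpoint Bs (s : seq bool) : seq bool :=
  match s with [::] => [::]
  | true :: s' => (if s' is false :: _ then true else false) :: Bs s'
  | false :: s' => Bs s' end.
Definition Ps (s : seq bool) := [seq k <- iota 0 (size s) | nth false s k].
Definition G' s := rcons (Gs s) (count negb s).

Lemma Ps_cons b s : Ps (b :: s) = if b then 0 :: map succn (Ps s) else map succn (Ps s).
Proof.
rewrite /Ps /= -add1n iotaDl filter_map /=.
by case: b.
Qed.

Lemma size_Gs s : size (Gs s) = count id s.
Proof. by elim: s => [|[] s IH] //=; rewrite ?size_map IH. Qed.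

Lemma size_Ps s : size (Ps s) = count id s.
Proof. by elim: s => [|[] s IH]; rewrite ?Ps_cons //= ?size_map IH. Qed.

Lemma map_Ps_G s : map (fun k => count negb (take k s)) (Ps s) = Gs s.
Proof.
elim: s => [|b s IH]; first by [].
rewrite Ps_cons; case: b => /=.
  by rewrite -map_comp -IH.
by rewrite -map_comp -IH -map_comp.
Qed.

Lemma map_Ps_B s : map (fun k => (k.+1 < size s) && ~~ nth false s k.+1) (Ps s) = Bs s.
Proof.
elim: s => [|b s IH]; first by [].
rewrite Ps_cons; case: b => /=.
  rewrite -map_comp -IH; congr (_ :: _); first by case: s {IH} => [|[] ?].
by rewrite -map_comp -IH.
Qed.

Lemma fx_G s j : count negb (take (nth 0 (Ps s) j) s) = nth 0 (Gs s) j.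
Proof.
rewrite -map_Ps_G; case: (ltnP j (size (Ps s))) => hj.
  by rewrite (nth_map 0).
by rewrite !nth_default ?size_map // take0.
Qed.

Lemma inEx_B s j : j < count id s ->
  ((nth 0 (Ps s) j).+1 < size s) && ~~ nth false s (nth 0 (Ps s) j).+1 = nth false (Bs s) j.
Proof.
move=> hj; rewrite -map_Ps_B (nth_map 0) // size_Ps //.
Qed.

Lemma size_G' s : size (G' s) = (count id s).+1.
Proof. by rewrite size_rcons size_Gs. Qed.

Lemma G'_true s : G' (true :: s) = 0 :: G' s.
Proof. by []. Qed.
Lemma G'_false s : G' (false :: s) = map succn (G' s).
Proof. by rewrite /G' /= map_rcons. Qed.

Lemma B_G s j : j < count id s ->
  nth false (Bs s) j = (nth 0 (G' s) j < nth 0 (G' s) j.+1).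
Proof.
elim: s j => [|[] s IH] j //.
  rewrite G'_true; case: j => [|j] hj /=; last by rewrite IH.
  case: s {IH hj} => [|[] s] //=.
  by rewrite G'_false (nth_map 0) // size_G'.
move=> hj; rewrite G'_false !(nth_map 0) ?size_G' ?ltnS ?IH //.
by apply: ltnW.
Qed.

Lemma G_mono s j : j < count id s -> nth 0 (G' s) j <= nth 0 (G' s) j.+1.
Proof.
elim: s j => [|[] s IH] j //.
  rewrite G'_true; case: j => [|j] hj //=; by rewrite IH.
move=> hj; rewrite G'_false !(nth_map 0) ?size_G' ?ltnS ?IH //.
by apply: ltnW.
Qed.

Lemma Gs_inj s s' : size s = size s' -> Gs s = Gs s' -> s = s'.
Proof.
elim: s s' => [|a s IH] [|b s'] //= [hs].
case: a; case: b => /=.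
- by case=> /IH ->.
- by case: (Gs s').
- by case: (Gs s).
- by move/(inj_map succn_inj)/IH ->.
Qed.

Fixpoint mk (f : seq nat) (base top : nat) : seq bool :=
  if f is a :: f' then nseq (a - base) false ++ true :: mk f' a top
  else nseq (top - base) false.

Lemma Gs_nseq k s : Gs (nseq k false ++ s) = map (addn k) (Gs s).
Proof.
elim: k => [|k IH] /=; first by rewrite map_id_in.
by rewrite IH -map_comp.
Qed.

Lemma mk_props f base top : path leq base f -> all (fun x => x <= top) f -> base <= top ->
  [/\ size (mk f base top) = size f + (top - base),
      count id (mk f base top) = size f &
      Gs (mk f base top) = map (subn^~ base) f].
Proof.
elim: f base => [|a f IH] base /=.
  move=> _ _ _; split; rewrite ?size_nseq ?count_nseq ?mul0n //.
  by rewrite -[nseq _ _]cats0 Gs_nseq.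
move=> /andP[ba pf] /andP[atp af] bt.
have [h1 h2 h3] := IH a pf af atp.
split.
- rewrite size_cat size_nseq /= h1; lia.
- by rewrite count_cat count_nseq mul0n /= h2.
- rewrite Gs_nseq /= h3 addn0 -map_comp; congr (_ :: _).
  apply/eq_in_map => x xf /=.
  have := allP (order_path_min leq_trans pf) x xf => /= ax.
  lia.
Qed.

Set Implicit Arguments. Unset Strict Implicit.

Lemma down (P : nat -> Prop) n : P n -> (forall j, j < n -> P j.+1 -> P j) ->
  forall j, j <= n -> P j.
Proof.
move=> Pn step j hj.
suff: forall k j, n - j = k -> j <= n -> P j by move/(_ _ j erefl hj).
elim=> [|k IH] i e hi.
  by have -> : i = n by lia.
apply: step; first by lia.
apply: IH; lia.
Qed.

Lemma count_negb_id s : count negb s + count id s = size s.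
Proof. by elim: s => [|[] s IH] //=; rewrite -IH; lia. Qed.

Section W.
Variables nx ny : nat.
Implicit Types w : word nx ny.

Definition sq w : seq bool := val (val w).
Definition gg w j := nth 0 (G' (sq w)) j.
Definition ee w j := nth false (Bs (sq w)) j.

Lemma cnt w : count id (sq w) = nx.
Proof. exact: (eqP (valP w)). Qed.
Lemma sz w : size (sq w) = nx + ny.
Proof. exact: size_tuple. Qed.
Lemma cntn w : count negb (sq w) = ny.
Proof. have := count_negb_id (sq w); rewrite cnt sz; lia. Qed.

Lemma fx_gg w i : i < nx -> fx w i.+1 = gg w i.
Proof.
move=> hi; rewrite /fx /xpos /= fx_G /gg /G' nth_rcons size_Gs.
by rewrite -/(sq w) cnt hi.
Qed.

Lemma inEx_ee w i : i < nx -> inEx w i.+1 = ee w i.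
Proof.
move=> hi; rewrite /inEx /xpos /= -/(sq w); apply: inEx_B.
by rewrite cnt.
Qed.

Lemma ee_gg w i : i < nx -> ee w i = (gg w i < gg w i.+1).
Proof. by move=> hi; rewrite /ee B_G // cnt. Qed.

Lemma gg_mono w i : i < nx -> gg w i <= gg w i.+1.
Proof. by move=> hi; rewrite /gg G_mono // cnt. Qed.

Lemma gg_top w : gg w nx = ny.
Proof. by rewrite /gg /G' nth_rcons size_Gs cnt ltnn eqxx cntn. Qed.

Lemma gg_le_top w i : i <= nx -> gg w i <= ny.
Proof.
move: i; apply: (@down (fun i => gg w i <= ny) nx); first by rewrite gg_top.
by move=> j hj h; apply: leq_trans h; apply: gg_mono.
Qed.

Lemma gg_inj w w' : (forall i, i < nx -> gg w i = gg w' i) -> w = w'.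
Proof.
move=> h.
have e : Gs (sq w) = Gs (sq w').
  apply: (@eq_from_nth _ 0); first by rewrite !size_Gs !cnt.
  move=> i; rewrite size_Gs cnt => hi.
  have := h i hi; rewrite /gg /G' !nth_rcons !size_Gs !cnt hi //.
have e2 : sq w = sq w' by apply: Gs_inj; rewrite ?sz.
by apply: val_inj; apply: val_inj.
Qed.

Lemma gg_exists (f : nat -> nat) :
  (forall i, i.+1 < nx -> f i <= f i.+1) -> (forall i, i < nx -> f i <= ny) ->
  exists u : word nx ny, forall i, i < nx -> gg u i = f i.
Proof.
move=> hm hb.
pose l := map f (iota 0 nx).
have pl : path leq 0 l.
  have : sorted leq l.
    apply/(sortedP 0) => i; rewrite size_map size_iota => hi.
    rewrite !(nth_map 0) ?size_iota //; last by apply: ltnW.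
    by rewrite !nth_iota //=; [apply: hm | apply: ltnW].
  by case: l.
have al : all (fun x => x <= ny) l.
  apply/allP => x /mapP[i]; rewrite mem_iota add0n => /andP[_ hi] ->.
  exact: hb.
have [h1 h2 h3] := @mk_props l 0 ny pl al (leq0n ny).
have hs : size (mk l 0 ny) == nx + ny by rewrite h1 size_map size_iota subn0.
have hc : count id (Tuple hs) == nx by rewrite /= h2 size_map size_iota.
exists (exist _ (Tuple hs) hc) => i hi.
rewrite /gg /sq /= /G' nth_rcons h3 map_id_in; last by move=> x _; rewrite subn0.
by rewrite size_map size_iota hi (nth_map 0) ?size_iota // nth_iota.
Qed.

End W.

Local Open Scope ring_scope.

Lemma prod_bool (I : finType) (b : I -> bool) :
  \prod_(i : I) ((b i)%:R : int) = ([forall i, b i])%:R.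
Proof.
case: (boolP [forall i, b i]) => [/forallP h | /forallPn [i hi]].
  by rewrite big1 // => i _; rewrite h.
by rewrite (bigD1 i) //= (negbTE hi) mul0r.
Qed.

Section Alg.
Variables nx ny : nat.
Implicit Types w t s u a b : word nx ny.

Definition sb (S : {ffun 'I_nx -> bool}) (j : nat) : bool := oapp S false (insub j).
Lemma sbE S (i : 'I_nx) : sb S i = S i.
Proof. by rewrite /sb valK. Qed.

Definition addw t (S : {ffun 'I_nx -> bool}) : word nx ny :=
  odflt t [pick u : word nx ny | [forall i : 'I_nx, gg u i == (gg t i + S i)%N]].

Lemma addw_spec t (S : {ffun 'I_nx -> bool}) : [forall i : 'I_nx, S i ==> ee t i] ->
  forall i : 'I_nx, gg (addw t S) i = (gg t i + S i)%N.
Proof.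
move/forallP => hS.
have hf : forall j, (j < nx)%N -> (gg t j + sb S j <= gg t j.+1)%N.
  move=> j hj; have := hS (Ordinal hj); rewrite -(sbE S (Ordinal hj)) /=.
  case: (sb S j) => /= h; last by rewrite addn0 gg_mono.
  by rewrite addn1 -ee_gg.
have h1 : forall j, (j.+1 < nx)%N -> (gg t j + sb S j <= gg t j.+1 + sb S j.+1)%N.
  move=> j hj; apply: leq_trans (hf j (ltnW hj)) _; apply: leq_addr.
have h2 : forall j, (j < nx)%N -> (gg t j + sb S j <= ny)%N.
  move=> j hj; apply: leq_trans (hf j hj) _; exact: gg_le_top.
have [u hu] := @gg_exists nx ny (fun j => gg t j + sb S j)%N h1 h2.
rewrite /addw; case: pickP => [x /forallP hx | /(_ u)].
  by move=> i; apply/eqP/hx.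
by move/negP; case; apply/forallP => i; rewrite hu // sbE.
Qed.

Lemma all_iota (p : pred nat) : all p (iota 1 nx) = [forall i : 'I_nx, p i.+1].
Proof.
apply/allP/forallP => h.
  by move=> i; apply: h; rewrite mem_iota; apply/andP; split => //; rewrite add1n ltnS.
move=> x; rewrite mem_iota => /andP[h1 h2].
have hx : (x.-1 < nx)%N by lia.
by have := h (Ordinal hx); rewrite /= prednK.
Qed.

Lemma pairwE a b : pairw a b = \prod_(i < nx) ((gg a i <= gg b i)%N%:R : int).
Proof.
rewrite prod_bool /pairw /wle all_iota.
have e : forall i : 'I_nx, (fx a i.+1 <= fx b i.+1)%N = (gg a i <= gg b i)%N.
  by move=> i; rewrite !fx_gg.
by rewrite (eq_forallb e).
Qed.

Definition P t (S : {ffun 'I_nx -> bool}) : int :=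
  \prod_(i < nx) ((S i ==> ee t i)%:R * (-1) ^+ S i).

Lemma sum_prod t (c : 'I_nx -> nat -> bool) (f : word nx ny -> 'I_nx -> nat) :
  (forall S : {ffun 'I_nx -> bool}, [forall i : 'I_nx, S i ==> ee t i] -> forall i : 'I_nx, f (addw t S) i = (gg t i + S i)%N) ->
  \sum_(S : {ffun 'I_nx -> bool}) P t S * \prod_(i < nx) ((c i (f (addw t S) i))%:R : int)
  = \prod_(i < nx) \sum_(b : bool) ((b ==> ee t i)%:R * (-1) ^+ b * (c i (gg t i + b)%N)%:R).
Proof.
move=> hf; rewrite bigA_distr_bigA /=; apply: eq_bigr => S _.
case: (boolP [forall i, S i ==> ee t i]) => hS.
  rewrite /P -big_split /=; apply: eq_bigr => i _; by rewrite hf.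
move: hS => /forallPn [i hi].
rewrite /P (bigD1 i) //= (negbTE hi) !mul0r.
by rewrite (bigD1 i) //= (negbTE hi) !mul0r.
Qed.

End Alg.

Lemma bool_sum (e : bool) (p : nat -> bool) g :
  \sum_(b : bool) ((b ==> e)%:R * (-1) ^+ b * (p (g + b)%N)%:R : int)
  = (p g)%:R - (e && p g.+1)%:R.
Proof.
rewrite big_bool /= addn1 addn0.
by case: e; case: (p g); case: (p g.+1).
Qed.

Section Alg2.
Variables nx ny : nat.
Implicit Types w t s u a b : word nx ny.

Lemma claimA t s : \sum_(S : {ffun 'I_nx -> bool}) P t S * pairw (addw t S) s = (t == s)%:R.
Proof.
rewrite (eq_bigr (fun S => P t S * \prod_(i<nx) ((gg (addw t S) i <= gg s i)%N%:R)));
  last by move=> S _; rewrite pairwE.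
rewrite (@sum_prod nx ny t (fun i x => (x <= gg s i)%N) (fun u i => gg u i));
  last exact: addw_spec.
rewrite (eq_bigr (fun i : 'I_nx => ((if ee t i then gg t i == gg s i else (gg t i <= gg s i)%N)%:R)));
  last first.
  move=> i _; rewrite (bool_sum _ (fun x => (x <= gg s i)%N)); case: (ee t i) => /=; last by rewrite subr0.
  by case: ltngtP.
rewrite prod_bool; congr (_%:R); congr (nat_of_bool _).
apply/idP/eqP => [/forallP h | <-]; last by apply/forallP => i; case: (ee t i).
apply: gg_inj => j hj.
have hle : forall j, (j < nx)%N -> (gg t j <= gg s j)%N.
  move=> k hk; have := h (Ordinal hk); rewrite /=; case: (ee t k) => // /eqP ->.
  by [].
have hge : forall j, (j <= nx)%N -> (gg s j <= gg t j)%N.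
  apply: (@down (fun j => (gg s j <= gg t j)%N) nx); first by rewrite !gg_top.
  move=> k hk IH; have := h (Ordinal hk); rewrite /=.
  case e: (ee t k); first by move/eqP ->.
  move=> _; move: e; rewrite ee_gg // => /negbT; rewrite -leqNgt => e.
  have e2 : gg t k = gg t k.+1 by apply/eqP; rewrite eqn_leq e gg_mono.
  by rewrite e2; apply: leq_trans IH; apply: gg_mono.
by apply/eqP; rewrite eqn_leq hle // hge // ltnW.
Qed.

Definition dd w t (i : 'I_nx) : bool :=
  if ee t i then gg w i == (gg t i).+1 else (gg w i <= gg t i)%N.

Lemma claimB w t : \sum_(S : {ffun 'I_nx -> bool}) P t S * pairw w (addw t S)
  = (-1) ^+ (\sum_(i < nx) (ee t i : nat))%N * ([forall i, dd w t i])%:R.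
Proof.
rewrite (eq_bigr (fun S => P t S * \prod_(i<nx) ((gg w i <= gg (addw t S) i)%N%:R)));
  last by move=> S _; rewrite pairwE.
rewrite (@sum_prod nx ny t (fun i x => (gg w i <= x)%N) (fun u i => gg u i));
  last exact: addw_spec.
rewrite -prod_bool -prodrXr -big_split /=; apply: eq_bigr => i _.
rewrite bool_sum /dd; case: (ee t i) => /=; last by rewrite subr0 mul1r.
by case: ltngtP => h; rewrite ?(ltnW h) ?(ltnS) ?(leqNgt _ (gg t i)) ?h //=;
  try (by rewrite ?ltnS ?leqnn ?h); move: h; lia.
Qed.

End Alg2.

Lemma pairF_basis (nx ny : nat) (z : word nx ny) (b : F nx ny) :
  pairF (basis z) b = \sum_t b t * pairw z t.
Proof.
rewrite /pairF (bigD1 z) //= [X in _ + X]big1 ?addr0 => [|s hs]; last first.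
  by apply: big1 => t _; rewrite ffunE (negbTE hs) !mul0r.
by apply: eq_bigr => t _; rewrite ffunE eqxx mul1r.
Qed.

Lemma size_Ex (nx ny : nat) (v : word nx ny) :
  size (Ex v) = (\sum_(i < nx) (ee v i : nat))%N.
Proof.
have e1 : iota 1 nx = map (addn 1) (iota 0 nx) by rewrite -iotaDl.
rewrite /Ex size_filter e1 count_map -sum1_count big_mkcond /=.
rewrite -(big_mkord xpredT (fun i => (ee v i : nat))) /index_iota subn0.
rewrite [in RHS]big_seq [in LHS]big_seq; apply: eq_bigr => i; rewrite mem_iota => /andP[_ hi].
by rewrite /= add1n inEx_ee //; case: (ee v i).
Qed.

Unset Implicit Arguments.
Theorem mainTheorem8 (nx ny : nat)
  (H : {additive F nx ny -> F nx ny})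
  (hH : forall u v : F nx ny, pairF u v = pairF v (H u))
  (w : word nx ny) :
  forall v : word nx ny,
    let cond :=
      forall i : nat, (1 <= i <= nx)%N ->
        (inEx v i -> (fx v i)%:Z = (fx w i)%:Z - 1) /\
        (~~ inEx v i -> (fx w i <= fx v i)%N) in
    (H (basis w) v != 0 <-> cond) /\
    (cond -> H (basis w) v = (-1) ^+ size (Ex v)).
Proof.
set h := H (basis w).
have step1 : forall z, \sum_t h t * pairw z t = pairw w z.
  move=> z; rewrite -pairF_basis -hH pairF_basis.
  rewrite (bigD1 z) //= big1 ?addr0 => [|t ht]; first by rewrite ffunE eqxx mul1r.
  by rewrite ffunE (negbTE ht) mul0r.
have hv : forall t, h t = (-1) ^+ (\sum_(i < nx) (ee t i : nat))%N * ([forall i, dd w t i])%:R.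
  move=> t; rewrite -claimB.
  have -> : h t = \sum_s h s * (t == s)%:R.
    rewrite (bigD1 t) //= eqxx mulr1 big1 ?addr0 // => s hs.
    by rewrite eq_sym (negbTE hs) mulr0.
  under eq_bigr do rewrite -claimA mulr_sumr.
  rewrite exchange_big /=; apply: eq_bigr => S _.
  rewrite -step1 mulr_sumr; apply: eq_bigr => s _; by rewrite mulrCA.
move=> v cond.
have hc : cond <-> [forall i, dd w v i].
  split.
    move=> hcd; apply/forallP => i; have := hcd i.+1; rewrite ltn_ord /= => /(_ isT).
    rewrite inEx_ee // !fx_gg // /dd; case: (ee v i) => -[h1 h2].
      by apply/eqP; move: (h1 isT); lia.
    exact: h2.
  move=> /forallP hd; rewrite /cond => -[|i] //= hi.
  have := hd (Ordinal hi); rewrite /dd /= inEx_ee // !fx_gg //.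
  case: (ee v i) => h1; split => //.
  by move: h1 => /eqP ->; lia.
rewrite hv size_Ex; split; last by move/hc => ->; rewrite mulr1.
split.
  by case: (boolP [forall i, dd w v i]) => [/hc|]; rewrite ?mulr0 ?eqxx.
by move/hc => ->; rewrite mulr1 signr_eq0.
Qed.
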